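(* Consider the semi-discrete finite volume scheme with Lax–Friedrichs flux for the multicomponent compressible Euler system described in the context. Assume $\rho_{i,K}(0)>0$ for all cells $K\in\mathcal{T}_h$ and all $i=1,\dots,\mathrm{n}$, and assume that the discrete velocity satisfies $\mathbf{u}_h=\mathbf{m}_h/\rho_h\in L^2(0,T;L^\infty(\Omega))$. Then there is a constant $\bar\rho_h>0$ such that the numerical solution satisfies \[ \rho_{i,K}(t)\ge \bar\rho_h>0\qquad\text{for all }K\in\mathcal{T}_h,\ t\in[0,T],\ i=1,\dots,\mathrm{n}. \]
   Context: Domain: $\Omega=([0,1]|_{\{0,1\}})^N$, $N\in\{1,2,3\}$ (flat torus, periodic). Multicomponent Euler system for $\mathrm{n}$ species: unknowns partial densities $\rho_i$, momentum $\mathbf{m}=\rho\mathbf{u}$, total energy $\mathcal{E}$, with $\rho=\sum_{i=1}^{\mathrm{n}}\rho_i$: $\partial_t\rho_i+\nabla\cdot(\rho_i\mathbf{u})=0$, $\partial_t\mathbf{m}+\nabla\cdot(\rho\mathbf{u}\otimes\mathbf{u}+p\mathbb{I})=0$, $\partial_t\mathcal{E}+\nabla\cdot((\mathcal{E}+p)\mathbf{u})=0$. Write $\mathbf{U}=(\rho_1,\dots,\rho_{\mathrm{n}},\mathbf{m},\mathcal{E})$ and $\mathbf{f}(\mathbf{U})=(\rho_1\mathbf{u},\dots,\rho_{\mathrm{n}}\mathbf{u},\rho\mathbf{u}\otimes\mathbf{u}+p\mathbb{I},(\mathcal{E}+p)\mathbf{u})$. Closure: $p=\sum_i\rho_i r_i\mathbb{T}$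 with constants $r_i>0$, and $\mathcal{E}=\sum_i\rho_i(e_{0i}+c_{vi}\mathbb{T})+\frac12\rho|\mathbf{u}|^2$ with constants $e_{0i}$, $c_{vi}>0$; $c_{pi}=c_{vi}+r_i$. Scheme: uniform Cartesian mesh $\mathcal{T}_h$ of $\Omega$ with mesh size $h$, cells $K$ with $|K|=h^N$, interfaces $S_{KL}=\partial K\cap\partial L$ with $|S_{KL}|=h^{N-1}$, unit normal $\mathbf{n}_{KL}$ from $K$ to $L$, $\mathcal{N}(K)$ the set of cells sharing a face with $K$. The piecewise constant solution $\mathbf{U}_h(t)$ has value $\mathbf{U}_K(t)$ on $K$, $\mathbf{U}_K(0)$ is the cell average of the initial data, and $|K|\frac{d}{dt}\mathbf{U}_K+\sum_{L\in\mathcal{N}(K)}|S_{KL}|\mathbf{F}_{KL}=0$, with $\mathbf{F}_{KL}=\frac{\mathbf{f}(\mathbf{U}_K)+\mathbf{f}(\mathbf{U}_L)}{2}\cdot\mathbf{n}_{KL}-\frac{\lambda_{KL}}{2}(\mathbf{U}_L-\mathbf{U}_K)$, $\lambda_{KL}=\max(|\mathbf{u}_K|+c_{\rm mix}(\mathbf{U}_K),|\mathbf{u}_L|+c_{\rm mix}(\mathbf{U}_L))$, $\mathbf{u}_K=\mathbf{m}_K/\rho_K$, $c_{\rm mix}^2=\gamma_{\rm mix}p/\rho$, $\gamma_{\rm mix}=\sum_i\rho_ic_{pi}/\sum_i\rho_ic_{vi}$. The global bound $\lambda=\max_K(|\mathbf{u}_K|+c_{\rm mix}(\mathbf{U}_K))\ge\lambda_{KL}$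 may be used as the viscosity coefficient. $\rho_{i,K}(t)$ denotes the $\rho_i$-component of $\mathbf{U}_K(t)$. *)

(* Defs.v *)
From HB Require Import structures.
From mathcomp Require Import all_boot all_order all_algebra.
From mathcomp Require Import all_classical all_reals all_analysis.
Set Implicit Arguments.
Unset Strict Implicit.
Unset Printing Implicit Defensive.
Import Order.TTheory GRing.Theory Num.Theory numFieldNormedType.Exports.
Local Open Scope classical_set_scope.
Local Open Scope ring_scope.

(* Conventions: division by 0 is 0 (MathComp), Num.sqrt of a negative is 0. *)

Section EulerState.
Variables (R : realType) (n N : nat).

Record state := State { srho : 'I_n -> R; smom : 'I_N -> R; sE : R }.

Definition rho_tot (U : state) : R := \sum_(i < n) srho U i.
Definition vel (U : state) (d : 'I_N) : R := smom U d / rho_tot U.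
Definition vnorm (U : state) : R := Num.sqrt (\sum_(d < N) vel U d ^+ 2).

Variables (r cv e0 : 'I_n -> R).

(* temperature from E = sum_i rho_i (e0_i + cv_i T) + 1/2 rho |u|^2 *)
Definition temp (U : state) : R :=
  (sE U - \sum_(i < n) srho U i * e0 i - 2^-1 * rho_tot U * vnorm U ^+ 2)
  / (\sum_(i < n) srho U i * cv i).
Definition pres (U : state) : R := \sum_(i < n) srho U i * r i * temp U.
(* gamma_mix = sum rho_i cp_i / sum rho_i cv_i, cp_i = cv_i + r_i *)
Definition gamma_mix (U : state) : R :=
  (\sum_(i < n) srho U i * (cv i + r i)) / (\sum_(i < n) srho U i * cv i).
Definition c_mix (U : state) : R := Num.sqrt (gamma_mix U * pres U / rho_tot U).
Definition wspeed (U : state) : R := vnorm U + c_mix U.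

(* physical flux f(U) . e_d, componentwise *)
Definition frho (U : state) (d : 'I_N) (i : 'I_n) : R := srho U i * vel U d.
Definition fmom (U : state) (d : 'I_N) (j : 'I_N) : R :=
  rho_tot U * vel U j * vel U d + (if j == d then pres U else 0).
Definition fE (U : state) (d : 'I_N) : R := (sE U + pres U) * vel U d.

Definition lamKL (UK UL : state) : R := Num.max (wspeed UK) (wspeed UL).

(* orientation of the unit normal n_KL = sgn s * e_d *)
Definition sgn (s : bool) : R := if s then 1 else -1.

Definition Frho (UK UL : state) (d : 'I_N) (s : bool) (i : 'I_n) : R :=
  sgn s * (frho UK d i + frho UL d i) / 2 - lamKL UK UL / 2 * (srho UL i - srho UK i).
Definition Fmom (UK UL : state) (d : 'I_N) (s : bool) (j : 'I_N) : R :=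
  sgn s * (fmom UK d j + fmom UL d j) / 2 - lamKL UK UL / 2 * (smom UL j - smom UK j).
Definition FE (UK UL : state) (d : 'I_N) (s : bool) : R :=
  sgn s * (fE UK d + fE UL d) / 2 - lamKL UK UL / 2 * (sE UL - sE UK).

End EulerState.

Section Mesh.
Variables (M N : nat).
(* uniform Cartesian mesh of the torus with M cells per direction, h = 1/M;
   a cell is indexed by its N integer coordinates in 'I_M *)
Definition cell := {ffun 'I_N -> 'I_M}.

Definition shift (s : bool) (k : 'I_M) : 'I_M :=
  insubd k (if s then k.+1 %% M else (k + M.-1) %% M)%N.

Definition nbr (K : cell) (d : 'I_N) (s : bool) : cell :=
  [ffun j => if j == d then shift s (K j) else K j].
End Mesh.

Section Scheme.
Variables (R : realType) (n N M : nat) (r cv e0 : 'I_n -> R).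
Local Notation st := (state R n N).

Definition hmesh : R := (M%:R)^-1.

(* U is a solution on [0,T] of the semi-discrete LF finite volume scheme
   |K| dU_K/dt + sum_{L in N(K)} |S_KL| F_KL = 0, |K| = h^N, |S_KL| = h^(N-1);
   the faces of K are indexed by (d, s) : 'I_N * bool. *)
Definition LF_solution (T : R) (U : cell M N -> R -> st) : Prop :=
  (forall K,
     (forall i, {within `[0, T]%classic, continuous (fun t : R => srho (U K t) i)}) /\
     (forall j, {within `[0, T]%classic, continuous (fun t : R => smom (U K t) j)}) /\
     {within `[0, T]%classic, continuous (fun t : R => sE (U K t))}) /\
  (forall K t, 0 < t < T ->
     (forall i,
        derivable (fun t : R => srho (U K t) i) t 1 /\
        hmesh ^+ N * derive1 (fun t : R => srho (U K t) i) t
        + \sum_(d < N) \sum_(s : bool)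
            hmesh ^+ N.-1 * Frho r cv e0 (U K t) (U (nbr K d s) t) d s i = 0) /\
     (forall j,
        derivable (fun t : R => smom (U K t) j) t 1 /\
        hmesh ^+ N * derive1 (fun t : R => smom (U K t) j) t
        + \sum_(d < N) \sum_(s : bool)
            hmesh ^+ N.-1 * Fmom r cv e0 (U K t) (U (nbr K d s) t) d s j = 0) /\
     (derivable (fun t : R => sE (U K t)) t 1 /\
        hmesh ^+ N * derive1 (fun t : R => sE (U K t)) t
        + \sum_(d < N) \sum_(s : bool)
            hmesh ^+ N.-1 * FE r cv e0 (U K t) (U (nbr K d s) t) d s = 0)).

(* ||u_h(t)||_{L^infty(Omega)} = max_K |u_K(t)| (u_h is piecewise constant) *)
Definition uinf (U : cell M N -> R -> st) (t : R) : R :=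
  \big[Num.max/0]_(K : cell M N) vnorm (U K t).
End Scheme.

Definition I0T (R : realType) (T : R) : set R := `[0, T]%classic.

Definition L2_0T (R : realType) (T : R) (f : R -> R) : Prop :=
  measurable_fun (I0T T) f /\
  (\int[@lebesgue_measure R]_(t in I0T T) ((f t) ^+ 2)%:E < +oo)%E.

(* Main.v *)
Require Import Defs.
From HB Require Import structures.
From mathcomp Require Import all_boot all_order all_algebra.
From mathcomp Require Import all_classical all_reals all_analysis.
From mathcomp Require Import measurable_realfun.
From mathcomp Require Import ring lra.
Import Order.TTheory GRing.Theory Num.Theory numFieldNormedType.Exports.
Set Implicit Arguments.
Unset Strict Implicit.
Local Open Scope classical_set_scope.
Local Open Scope ring_scope.


Section Alg.
Variables (R : realType) (n N : nat) (r cv e0 : 'I_n -> R).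

Lemma vel_le_vnorm (U : state R n N) d : `|vel U d| <= vnorm U.
Proof.
rewrite /vnorm -sqrtr_sqr; apply: ler_wsqrtr.
rewrite (bigD1 d) //= lerDl; apply: sumr_ge0 => j _; exact: sqr_ge0.
Qed.

Lemma vnorm_le_lam (UK UL : state R n N) : vnorm UL <= lamKL r cv e0 UK UL.
Proof.
rewrite /lamKL le_max; apply/orP; right.
by rewrite /wspeed lerDl /c_mix sqrtr_ge0.
Qed.

Lemma Frho_le (UK UL : state R n N) d s i u :
  0 <= srho UK i <= srho UL i -> vnorm UK <= u -> vnorm UL <= u ->
  Frho r cv e0 UK UL d s i <= srho UK i * u.
Proof.
move=> /andP[a0 ab] hK hL.
have hx := le_trans (vel_le_vnorm UK d) hK.
have hy := le_trans (vel_le_vnorm UL d) hL.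
have hyl := le_trans (vel_le_vnorm UL d) (vnorm_le_lam UK UL).
move: hx hy hyl; rewrite /Frho /frho.
set a := srho UK i in a0 ab *; set b := srho UL i in ab *; set x := vel UK d; set y := vel UL d.
set l := lamKL r cv e0 UK UL.
move=> /ler_normlP[hx1 hx2] /ler_normlP[hy1 hy2] /ler_normlP[hl1 hl2].
have h1 : 0 <= a * (u - x) by apply: mulr_ge0; lra.
have h2 : 0 <= a * (u + x) by apply: mulr_ge0; lra.
have h3 : 0 <= a * (u - y) by apply: mulr_ge0; lra.
have h4 : 0 <= a * (u + y) by apply: mulr_ge0; lra.
have h5 : 0 <= (b - a) * (l - y) by apply: mulr_ge0; lra.
have h6 : 0 <= (b - a) * (l + y) by apply: mulr_ge0; lra.
case: s; rewrite /sgn; nra.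
Qed.
End Alg.


Lemma ode_lb (R : realType) (N : nat) (H rho' B : R) (F : 'I_N -> bool -> R) :
  0 < H -> (0 < N)%N ->
  H ^+ N * rho' + \sum_(d < N) \sum_(s : bool) H ^+ N.-1 * F d s = 0 ->
  (forall d s, F d s <= B) -> - ((N * 2)%:R * B) / H <= rho'.
Proof.
move=> H0 N0 eq FB.
have hs : \sum_(d < N) \sum_(s : bool) H ^+ N.-1 * F d s <= H ^+ N.-1 * ((N * 2)%:R * B).
  apply: le_trans (_ : \sum_(d < N) \sum_(s : bool) H ^+ N.-1 * B <= _).
    apply: ler_sum => d _; apply: ler_sum => s _.
    by apply: ler_wpM2l; [apply: exprn_ge0; apply: ltW|].
  rewrite !big_const card_ord card_bool /= iter_addr addr0.
  have -> : forall x : R, (x + (x + 0)) *+ N = (N*2)%:R * x.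
    by move=> x; rewrite addr0 -mulr2n -mulrnA mulr_natl mulnC.
  by rewrite [X in _ <= X]mulrCA.
have hN : H ^+ N = H ^+ N.-1 * H by rewrite -exprSr prednK.
have hp : 0 < H ^+ N.-1 by apply: exprn_gt0.
rewrite ler_pdivrMr //.
have : H ^+ N.-1 * (- ((N * 2)%:R * B)) <= H ^+ N.-1 * (rho' * H).
  have -> : H ^+ N.-1 * (rho' * H) = H ^+ N * rho' by rewrite hN; ring.
  lra.
by rewrite ler_pM2l.
Qed.


Section H.
Variable R : realType.
Definition revt (P : R -> Prop) := exists2 d : R, 0 < d & forall h, 0 < h < d -> P h.

Lemma revt_mono {P Q : R -> Prop} : (forall h, 0 < h -> P h -> Q h) -> revt P -> revt Q.
Proof. move=> PQ [d d0 Hd]; exists d => // h /andP[h0 hd]; apply: PQ => //; apply: Hd; lra. Qed.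

Lemma revt_and {P Q : R -> Prop} : revt P -> revt Q -> revt (fun h => P h /\ Q h).
Proof.
move=> [d d0 Hd] [e e0 He]; exists (Num.min d e); first by rewrite lt_min d0 e0.
move=> h /andP[h0]; rewrite lt_min => /andP[hd he]; split; [apply: Hd|apply: He]; lra.
Qed.

Lemma revt_fin (I : finType) (P : I -> R -> Prop) :
  (forall i, revt (P i)) -> revt (fun h => forall i, P i h).
Proof.
move=> HP.
suff : forall s : seq I, revt (fun h => forall i, i \in s -> P i h).
  by move=> /(_ (enum I)); apply: revt_mono => h _ H i; apply: H; rewrite mem_enum.
elim => [|a s IH]; first by exists 1 => // h _ i; rewrite in_nil.
apply: revt_mono (revt_and (HP a) IH) => h _ [Ha Hs] i; rewrite inE => /orP[/eqP->//|].
exact: Hs.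
Qed.

Lemma near_right_revt (x : R) (P : R -> Prop) :
  (\forall y \near x^'+, P y) -> revt (fun h => P (x + h)).
Proof.
rewrite /at_right near_withinE => /nbhs_ballP [e /= e0 He].
exists e => // h /andP[h0 he]; apply: He.
  by rewrite /ball /= opprD addrA subrr add0r normrN gtr0_norm.
by rewrite ltrDl.
Qed.

Lemma near_revt (x : R) (P : R -> Prop) :
  (\forall y \near x, P y) -> revt (fun h => P (x + h)) /\ revt (fun h => P (x - h)).
Proof.
move=> /nbhs_ballP [e /= e0 He]; split; exists e => // h /andP[h0 he]; apply: He.
  by rewrite /ball /= opprD addrA subrr add0r normrN gtr0_norm.
by rewrite /ball /= opprB addrC subrK gtr0_norm.
Qed.

Lemma near_left_revt (x : R) (P : R -> Prop) :
  (\forall y \near x^'-, P y) -> revt (fun h => P (x - h)).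
Proof.
rewrite /at_left near_withinE => /nbhs_ballP [e /= e0 He].
exists e => // h /andP[h0 he]; apply: He.
  by rewrite /ball /= opprB addrC subrK gtr0_norm.
by rewrite ltrBlDr ltrDl.
Qed.

Lemma near_dn_revt (P : R -> Prop) :
  (\forall y \near 0^', P y) -> revt P.
Proof.
rewrite near_withinE => /nbhs_ballP [e /= e0 He].
exists e => // h /andP[h0 he]; apply: He.
  by rewrite /ball /= sub0r normrN gtr0_norm.
by rewrite gt_eqF.
Qed.

Lemma cont_right {T t e : R} {f : R -> R} :
  {within `[0, T], continuous f} -> 0 < T -> 0 <= t < T -> 0 < e ->
  revt (fun h => `|f (t + h) - f t| < e).
Proof.
move=> /(continuous_within_itvP _ ) H T0 /andP[t0 tT] e0; have [Hin Hl Hr] := H T0.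
have hP : forall y, `|f t - f y| < e -> `|f y - f t| < e by move=> y; rewrite distrC.
move: t0; rewrite le_eqVlt => /orP[/eqP t0|t0].
  subst t; move/cvgrPdist_lt: Hl => /(_ e e0) /near_right_revt.
  by apply: revt_mono => h _; rewrite distrC.
have : t \in `]0, T[ by rewrite in_itv /= t0 tT.
move=> /Hin /cvgrPdist_lt /(_ e e0) /near_revt [+ _].
by apply: revt_mono => h _; rewrite distrC.
Qed.

Lemma cont_left {T t e : R} {f : R -> R} :
  {within `[0, T], continuous f} -> 0 < T -> 0 < t <= T -> 0 < e ->
  revt (fun h => `|f (t - h) - f t| < e).
Proof.
move=> /(continuous_within_itvP _ ) H T0 /andP[t0 tT] e0; have [Hin Hl Hr] := H T0.
move: tT; rewrite le_eqVlt => /orP[/eqP tT|tT].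
  subst t; move/cvgrPdist_lt: Hr => /(_ e e0) /near_left_revt.
  by apply: revt_mono => h _; rewrite distrC.
have : t \in `]0, T[ by rewrite in_itv /= t0 tT.
move=> /Hin /cvgrPdist_lt /(_ e e0) /near_revt [_].
by apply: revt_mono => h _; rewrite distrC.
Qed.

Lemma cont_left_closed (T t c : R) (f : R -> R) :
  {within `[0, T], continuous f} -> 0 < T -> 0 < t <= T ->
  (forall s, 0 <= s < t -> c <= f s) -> c <= f t.
Proof.
move=> fc T0 tT Hs; rewrite leNgt; apply/negP => ft.
have e0 : 0 < c - f t by lra.
have [d d0 Hd] := cont_left fc T0 tT e0.
move: tT => /andP[t0 tT].
pose h := Num.min d t / 2.
have hm : 0 < Num.min d t by rewrite lt_min d0 t0.
have m1 : Num.min d t <= d by rewrite ge_min lexx.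
have m2 : Num.min d t <= t by rewrite ge_min lexx orbT.
have hd : 0 < h < d by apply/andP; split; rewrite /h; lra.
have hh : 0 <= t - h < t by apply/andP; split; rewrite /h; lra.
move: (Hs _ hh) (Hd h hd) => H1 /ltr_normlP [H2 H3]; lra.
Qed.

Lemma deriv_right (t e : R) (f : R -> R) :
  derivable f t 1 -> 0 < e ->
  revt (fun h => `|(f (t + h) - f t) / h - derive1 f t| < e).
Proof.
move=> df e0; have := df; rewrite /derivable => /cvgrPdist_lt /(_ e e0).
move=> /near_dn_revt; apply: revt_mono => h h0.
rewrite derive1E /derive distrC /=.
have -> : h%:A = h by rewrite /GRing.scale /= mulr1.
by move=> H; rewrite (addrC t) mulrC; exact: H.
Qed.

Lemma deriv_cont (t : R) (f : R -> R) :
  derivable f t 1 -> {for t, continuous f}.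
Proof. by move=> /derivable1_diffP /differentiable_continuous. Qed.
End H.


Section Leb.
Variables (R : realType) (T : R) (f : R -> R).
Hypothesis f0 : forall x, 0 <= f x.
Hypothesis mf : measurable_fun (I0T T) f.
Hypothesis f2 : (\int[@lebesgue_measure R]_(t in (I0T T)) ((f t) ^+ 2)%:E < +oo)%E.
Local Notation mu := (@lebesgue_measure R).

Definition Pint (t : R) : R := fine (\int[mu]_(x in (I0T t)) (f x)%:E).

Lemma mfE : measurable_fun (I0T T) (fun x : R => (f x)%:E).
Proof. exact/measurable_EFinP. Qed.

Lemma int_fin : 0 <= T -> (\int[mu]_(x in (I0T T)) (f x)%:E < +oo)%E.
Proof.
move=> T0.
apply: (le_lt_trans (y := (\int[mu]_(x in (I0T T)) (cst 1%E x + ((f x) ^+ 2)%:E))%E)).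
  apply: ge0_le_integral => //.
  - exact: measurable_itv.
  - by move=> x _; rewrite lee_fin.
  - exact: mfE.
  - apply: emeasurable_funD; first exact: measurable_cst.
    by apply/measurable_EFinP; apply: measurable_funX; exact: mf.
  - move=> x _; rewrite /= -EFinD lee_fin /=; have := f0 x; nra.
rewrite ge0_integralD //; first last.
all: try (first [exact: measurable_itv | by move=> x _; rewrite lee_fin sqr_ge0 | by move=> x _; rewrite lee_fin | exact: measurable_cst | by apply/measurable_EFinP; apply: measurable_funX; exact: mf]).
rewrite integral_cst /=; last exact: measurable_itv.
rewrite lebesgue_measure_itv /=.
case: ifP => _.
  by rewrite mul1e lte_add_pinfty // ltry.
by rewrite mul1e add0e.
Qed.

Lemma mfS (D : set R) : measurable D -> D `<=` I0T T -> measurable_fun D (fun x : R => (f x)%:E).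
Proof. move=> mD DT; apply: measurable_funS mfE => //; exact: measurable_itv. Qed.

Lemma int_finS {D : set R} : measurable D -> D `<=` I0T T -> 0 <= T ->
  (\int[mu]_(x in D) (f x)%:E)%E \is a fin_num.
Proof.
move=> mD DT T0; rewrite ge0_fin_numE; last by apply: integral_ge0 => x _; rewrite lee_fin.
apply: le_lt_trans (int_fin T0).
apply: ge0_subset_integral => //; first exact: measurable_itv.
- exact: mfE.
- by move=> x _; rewrite lee_fin.
Qed.

Lemma P_split a b v : 0 <= a -> a <= b -> b <= T -> 0 <= v ->
  (forall x, a < x <= b -> v <= f x) -> Pint a + v * (b - a) <= Pint b.
Proof.
move=> a0 ab bT v0 Hv.
have T0 : 0 <= T by lra.
have sub t : 0 <= t <= T -> I0T t `<=` I0T T.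
  move=> /andP[t0 tT] x; rewrite /I0T /= !in_itv /= => /andP[x0 xt].
  by rewrite x0 /=; lra.
have subab : `]a, b] `<=` I0T T.
  move=> x; rewrite /I0T /= !in_itv /= => /andP[x0 xt].
  apply/andP; split; lra.
have eqU : I0T b = I0T a `|` `]a, b].
  rewrite /I0T; apply: itv_bndbnd_setU; rewrite bnd_simp //.
have dis : [disjoint I0T a & `]a, b]].
  apply/disj_setPS => x []; rewrite /I0T /= !in_itv /= => /andP[_ xa] /andP[ax _].
  lra.
have fa := int_finS (measurable_itv _) (sub a ltac:(apply/andP; split; lra)) T0.
have fb := int_finS (measurable_itv _) (sub b ltac:(apply/andP; split; lra)) T0.
rewrite -lee_fin /Pint EFinD fineK // fineK //.
rewrite eqU ge0_integral_setU //.
all: try (first [exact: measurable_itv | by move=> x _; rewrite lee_fin | by rewrite -eqU; apply: mfS; [exact: measurable_itv | apply: sub; apply/andP; split; lra]]).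
apply: leeD => //.
apply: le_trans (_ : (\int[mu]_(x in `]a, b]) (cst v%:E x) <= _)%E).
  rewrite integral_cst /=; last exact: measurable_itv.
  rewrite lebesgue_measure_itv /=.
  case: ifP => ab'.
    by rewrite -EFinD -EFinM lee_fin addrC.
  have -> : b = a by move: ab'; rewrite lte_fin; lra.
  by rewrite subrr mulr0 mule0.
apply: ge0_le_integral => //.
all: try (first [exact: measurable_itv | by move=> x _; rewrite lee_fin | exact: measurable_cst | by apply: mfS => //; exact: measurable_itv]).
Qed.
End Leb.


Section C.
Variable R : realType.

Lemma cont_sum (I : finType) (g : I -> R -> R) (t : R) :
  (forall i, {for t, continuous (g i)}) -> {for t, continuous (fun x => \sum_(i : I) g i x)}.
Proof.
move=> Hg; rewrite /continuous_at.
suff : forall s : seq I, (fun x => \sum_(i <- s) g i x) @ t --> \sum_(i <- s) g i t by apply.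
elim => [|a s IH].
  under eq_fun do rewrite big_nil; rewrite big_nil; exact: cvg_cst.
under eq_fun do rewrite big_cons; rewrite big_cons.
exact: (cvgD (Hg a) IH).
Qed.

Variables (n N : nat).

Lemma vnorm_cont (U : R -> state R n N) (t : R) :
  (forall i, {for t, continuous (fun x => srho (U x) i)}) ->
  (forall j, {for t, continuous (fun x => smom (U x) j)}) ->
  rho_tot (U t) != 0 ->
  {for t, continuous (fun x => vnorm (U x))}.
Proof.
move=> Hr Hm Hnz.
have Hrt : {for t, continuous (fun x => rho_tot (U x))} by apply: cont_sum.
have Hv : forall d, {for t, continuous (fun x => vel (U x) d)}.
  move=> d; exact: (cvgM (Hm d) (cvgV Hnz Hrt)).
have Hs : {for t, continuous (fun x => \sum_(d < N) vel (U x) d ^+ 2)}.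
  apply: cont_sum => d.
  exact: (cvgM (Hv d) (Hv d)).
rewrite /vnorm.
apply: (continuous_comp (f := fun x => \sum_(d < N) vel (U x) d ^+ 2) Hs).
exact: sqrt_continuous.
Qed.
End C.
Lemma arA (R : realFieldType) (c h p q v u e t : R) : 0 < c -> 0 < h -> p + v * h <= q ->
  u - e <= v -> c * e = 1 / 2 ->
  - (1 + (t + h)) - c * q <= - (1 + t) - c * p - (c * u + 1 / 2) * h.
Proof.
move=> c0 h0 pq uv ce.
have m1 : c * (p + v * h) <= c * q by rewrite ler_pM2l.
have m2 : c * ((u - e) * h) <= c * (v * h) by rewrite ler_pM2l // ler_pM2r.
have : c * ((u - e) * h) = c * u * h - h / 2 by rewrite mulrBl mulrBr !mulrA ce; ring.
have : c * (p + v * h) = c * p + c * (v * h) by ring.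
lra.
Qed.

Lemma arB (R : realFieldType) (a h d rh cu : R) : 0 < h -> - (cu * a) <= d ->
  `|(rh - a) / h - d| < a / 4 -> a - (cu * a + a / 4) * h < rh.
Proof.
move=> h0 hd /ltr_normlP [h1 h2].
have : (d - a / 4) * h < rh - a by rewrite -ltr_pdivlMr //; lra.
have : (- (cu * a) - a / 4) * h <= (d - a / 4) * h by rewrite ler_pM2r //; lra.
have : (- (cu * a) - a / 4) * h = - ((cu * a + a / 4) * h) by ring.
lra.
Qed.

Lemma arC (R : realFieldType) (a h y rh : R) : 0 < a -> 0 < h -> 0 < y ->
  h * (y * (y + 1 / 4)) < 1 / 4 -> a * (1 - y * h) < rh ->
  a / (1 + (y + 1 / 4) * h) <= rh.
Proof.
move=> a0 h0 y0 hs hr.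
have x0 : 0 < 1 + (y + 1 / 4) * h by rewrite addr_gt0 // mulr_gt0 //; lra.
rewrite ler_pdivrMr //.
have k : 0 <= a * h * (1 / 4 - h * (y * (y + 1 / 4))).
  by rewrite mulr_ge0 ?mulr_ge0 ?ltW //; lra.
have : a * (1 - y * h) * (1 + (y + 1 / 4) * h) - a = a * h * (1 / 4 - h * (y * (y + 1 / 4))).
  by ring.
have : a * (1 - y * h) * (1 + (y + 1 / 4) * h) <= rh * (1 + (y + 1 / 4) * h).
  by rewrite ler_pM2r // ltW.
lra.
Qed.

Lemma arD (R : realFieldType) (a cu h : R) : a - (cu * a + a / 4) * h = a * (1 - (cu + 1 / 4) * h).
Proof. by ring. Qed.
Lemma arE (R : realFieldType) (cu h : R) : (cu + 1 / 2) * h = ((cu + 1 / 4) + 1 / 4) * h.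
Proof. have : (1 / 2 : R) = 1 / 4 + 1 / 4 by field. by move=> ->; ring. Qed.

Lemma arF (R : realFieldType) (ts T d : R) : 0 < d -> ts < T ->
  0 < Num.min d (T - ts) / 2 /\ Num.min d (T - ts) / 2 < d /\ ts + Num.min d (T - ts) / 2 <= T.
Proof.
move=> d0 tsT.
have m0 : 0 < Num.min d (T - ts) by rewrite lt_min d0 subr_gt0.
have m1 : Num.min d (T - ts) <= d by rewrite ge_min lexx.
have m2 : Num.min d (T - ts) <= T - ts by rewrite ge_min lexx orbT.
split; [lra | split; lra].
Qed.


Unset Implicit Arguments.
Set Strict Implicit.

Theorem theorem3p1 (R : realType) (n N M : nat) (r cv e0 : 'I_n -> R) (T : R)
  (U : cell M N -> R -> state R n N) :
  (1 <= N <= 3)%N -> (0 < n)%N -> (0 < M)%N -> 0 < T ->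
  (forall i, 0 < r i) -> (forall i, 0 < cv i) ->
  LF_solution r cv e0 T U ->
  (forall K i, 0 < srho (U K 0) i) ->
  L2_0T T (uinf U) ->
  exists rb : R, 0 < rb /\
    forall (K : cell M N) (t : R) (i : 'I_n), 0 <= t <= T -> rb <= srho (U K t) i.
Proof.
move=> /andP[N1 N3] n0 M0 T0 r0 cv0 [Hcont Hder] Hinit [mf f2].
set f := uinf U.
have f0 : forall x, 0 <= f x by move=> x; rewrite /f /uinf; exact: bigmax_ge_id.
pose P := Pint f.
have Pmono : forall a b, 0 <= a -> a <= b -> b <= T -> P a <= P b.
  move=> a b a0 ab bT.
  have := P_split f0 mf f2 a0 ab bT (lexx 0) (fun x _ => f0 x).
  by rewrite mul0r addr0.
have P0 : forall t, 0 <= P t.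
  by move=> t; apply: fine_ge0; apply: integral_ge0 => x _; rewrite lee_fin.
pose c : R := (N * 2)%:R * M%:R.
have c0 : 0 < c by rewrite /c mulr_gt0 // ltr0n // muln_gt0 N1.
pose th s := - (1 + s) - c * P s.
pose m0 := \big[Num.min/1]_(p : cell M N * 'I_n) srho (U p.1 0) p.2.
have m0pos : 0 < m0.
  rewrite /m0; apply: (big_ind (fun x => 0 < x)) => //.
  all: try by move=> x y x0 y0; rewrite lt_min x0 y0.
  all: try by move=> [K i] _; apply: Hinit.
have m0le : forall K i, m0 <= srho (U K 0) i.
  by move=> K i; rewrite /m0; apply: (bigmin_le _ (K, i)).
pose tg s := m0 * expR (th s).
pose Good s := forall K i, tg s <= srho (U K s) i.
have tg_mono : forall s t, 0 <= s -> s <= t -> t <= T -> tg t <= tg s.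
  move=> s t s0 st tT; rewrite /tg ler_pM2l // ler_expR /th.
  have := Pmono s t s0 st tT; have := P0 s.
  move=> h1 h2; have : c * P s <= c * P t by rewrite ler_pM2l.
  lra.
have tg0 : forall K i, tg 0 < srho (U K 0) i.
  move=> K i; apply: lt_le_trans (m0le K i).
  rewrite /tg gtr_pMr // expR_lt1 /th.
  have := P0 0; have : 0 <= c * P 0 by rewrite mulr_ge0 // ltW.
  lra.
have good0 : Good 0 by move=> K i; apply: ltW.
have H0 : 0 < hmesh R M by rewrite /hmesh invr_gt0 ltr0n.
have step : forall t, 0 <= t < T -> Good t -> revt (fun h => Good (t + h)).
  move=> t /andP[t0 tT] Gt.
  apply: revt_fin => K; apply: revt_fin => i.
  have hT : revt (fun h => t + h <= T).
    by exists (T - t); [lra | move=> h /andP[h0 h1]; lra].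
  have := Gt K i; rewrite le_eqVlt => /orP[/eqP eqa|lta].
    have tpos : 0 < t.
      rewrite lt_neqAle t0 andbT; apply/eqP => et.
      by move: (tg0 K i); rewrite et eqa ltxx.
    have tin : 0 < t < T by rewrite tpos tT.
    have [Hi [Hj _]] := Hder K t tin.
    set a := srho (U K t) i in eqa *.
    have ea : tg t = a := eqa.
    have a0 : 0 < a by rewrite -ea /tg mulr_gt0 // expR_gt0.
    pose u := f t.
    have u0 : 0 <= u := f0 t.
    have vK : forall K', vnorm (U K' t) <= u.
      by move=> K'; rewrite /u /f /uinf; exact: le_bigmax.
    have dlb : - (c * u * a) <= derive1 (fun x => srho (U K x) i) t.
      have Hb : forall d s, Frho r cv e0 (U K t) (U (nbr K d s) t) d s i <= a * u.
        move=> d s; apply: Frho_le; last 2 first.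
        - exact: vK.
        - exact: vK.
        apply/andP; split; first exact: ltW.
        by move: (Gt (nbr K d s) i); rewrite ea.
      have := ode_lb (F := fun d s => Frho r cv e0 (U K t) (U (nbr K d s) t) d s i) H0 N1 (Hi i).2 Hb.
      suff -> : - (c * u * a) = - ((N * 2)%:R * (a * u)) / hmesh R M by [].
      by rewrite /hmesh invrK /c; ring.
    pose eta := (2 * c)^-1.
    have eta0 : 0 < eta by rewrite /eta invr_gt0 mulr_gt0.
    have ceta : c * eta = 1 / 2.
      by rewrite /eta invfM mulrCA divff ?gt_eqF // mulr1 mul1r.
    have hK : forall K', revt (fun h => vnorm (U K' t) - eta <= vnorm (U K' (t + h))).
      move=> K'.
      have [Hi' [Hj' _]] := Hder K' t tin.
      have [z|nz] := eqVneq (rho_tot (U K' t)) 0.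
        exists 1 => // h _.
        have -> : vnorm (U K' t) = 0.
          rewrite /vnorm big1 ?sqrtr0 // => d _.
          by rewrite /vel z invr0 mulr0 expr2 mulr0.
        have : 0 <= vnorm (U K' (t + h)) by rewrite /vnorm sqrtr_ge0.
        lra.
      have hc' := vnorm_cont (fun i => deriv_cont (Hi' i).1) (fun j => deriv_cont (Hj' j).1) nz.
      move/cvgrPdist_lt: hc' => /(_ eta eta0) /near_revt [+ _].
      by apply: revt_mono => h _ /ltr_normlP [h1 h2]; lra.
    have hl0 := revt_fin hK.
    have hl : revt (fun h => forall x, t < x <= t + h -> u - eta <= f x).
      case: hl0 => d d0 Hd; exists d => // h /andP[h0 hd] x /andP[tx xth].
      have hx : 0 < x - t < d by apply/andP; split; lra.
      have := Hd _ hx; rewrite addrC subrK => Hx.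
      rewrite lerBlDr /u /f /uinf; apply: bigmax_le.
        by apply: addr_ge0; [exact: bigmax_ge_id | exact: ltW].
      move=> K' _; apply: le_trans (_ : vnorm (U K' x) + eta <= _).
        by have := Hx K'; lra.
      by rewrite lerD2r; exact: le_bigmax.
    have a40 : 0 < a / 4 by rewrite divr_gt0.
    have hd := deriv_right (Hi i).1 a40.
    pose y := c * u + 1 / 4.
    have cu0 : 0 <= c * u by rewrite mulr_ge0 // ltW.
    have y0 : 0 < y by rewrite /y; lra.
    have hs : revt (fun h => h * (y * (y + 1 / 4)) < 1 / 4).
      exists ((1 / 4) / (y * (y + 1 / 4))).
        by rewrite divr_gt0 // mulr_gt0 // addr_gt0 // divr_gt0.
      move=> h /andP[h0 hh]; rewrite -ltr_pdivlMr //.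
      by rewrite mulr_gt0 // addr_gt0 // divr_gt0.
    apply: revt_mono (revt_and hT (revt_and hd (revt_and hl hs))) => h h0 [htT [hdh [hlh hsh]]].
    pose v := Num.max 0 (u - eta).
    have hv : P t + v * h <= P (t + h).
      have th' : t <= t + h by lra.
      have v0 : 0 <= v by rewrite /v le_max lexx.
      have hvx : forall x, t < x <= t + h -> v <= f x.
        by move=> x hx; rewrite /v ge_max f0 hlh.
      have := P_split f0 mf f2 t0 th' htT v0 hvx.
      by have -> : t + h - t = h by ring.
    have vge : u - eta <= v by rewrite /v le_max lexx orbT.
    pose x := (c * u + 1 / 2) * h.
    have x0 : 0 <= x by rewrite /x; apply: mulr_ge0; lra.
    have th_le : th (t + h) <= th t - x.
      exact: (arA t c0 h0 hv vge ceta).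
    have tgle : tg (t + h) <= a / (1 + x).
      apply: le_trans (_ : m0 * expR (th t - x) <= _).
        by rewrite /tg ler_pM2l // ler_expR.
      rewrite expRD -ea /tg -mulrA ler_pM2l // ler_pM2l ?expR_gt0 // expRN.
      rewrite lef_pV2 ?posrE ?expR_gt0 //; last by rewrite ltr_pwDl.
      exact: expR_ge1Dx.
    have rho_lb : a - (c * u * a + a / 4) * h < srho (U K (t + h)) i.
      move: hdh => /= hdh.
      exact: (arB h0 dlb hdh).
    apply: le_trans tgle _.
    have hx : x = (y + 1 / 4) * h by exact: arE.
    have ee : a - (c * u * a + a / 4) * h = a * (1 - y * h) by exact: arD.
    rewrite hx; apply: arC a0 h0 y0 hsh _.
    by rewrite -ee.
  have tt : 0 <= t < T by rewrite t0 tT.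
  have ee : 0 < srho (U K t) i - tg t by rewrite subr_gt0.
  have hc := cont_right ((Hcont K).1 i) T0 tt ee.
  apply: revt_mono (revt_and hT hc) => h h0 [htT hcl].
  have := tg_mono t (t + h) t0 (ltac:(lra) : t <= t + h) htT.
  move: hcl => /ltr_normlP [h1 h2]; lra.
pose S : set R := fun s => 0 <= s <= T /\ forall s', 0 <= s' <= s -> Good s'.
have S0 : S 0.
  split; first by rewrite lexx ltW.
  move=> s' hs; have -> : s' = 0 by apply/eqP; rewrite eq_le andbC.
  exact: good0.
have Sne : (S !=set0)%classic by exists 0.
have Sub : ubound S T by move=> s [/andP[_ sT] _].
have hsup : has_sup S by split => //; exists T.
pose ts := sup S.
have ts0 : 0 <= ts by apply: sup_upper_bound.
have tsT : ts <= T by apply: ge_sup.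
have Gbelow : forall s, 0 <= s < ts -> Good s.
  move=> s /andP[s0 sts].
  have [e [_ He] lte] := sup_adherent (ltac:(by rewrite subr_gt0) : 0 < ts - s) hsup.
  apply: He; rewrite s0 /=; move: lte; rewrite opprB addrC subrK => /ltW //.
have Gts : Good ts.
  have [ets|nz] := eqVneq ts 0; first by rewrite ets.
  have tspos : 0 < ts by rewrite lt_neqAle eq_sym nz ts0.
  move=> K i.
  apply: (cont_left_closed ((Hcont K).1 i) T0 (ltac:(by rewrite tspos tsT) : 0 < ts <= T)).
  move=> s /andP[s0 sts].
  apply: le_trans (tg_mono s ts s0 (ltW sts) tsT) _.
  by apply: Gbelow; rewrite s0 sts.
have tsE : ts = T.
  apply/eqP; rewrite eq_le tsT /= leNgt; apply/negP => tsltT.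
  have [d d0 Hd] := step ts (ltac:(by rewrite ts0 tsltT)) Gts.
  have [m0' [md mT]] := arF d0 tsltT.
  set m := Num.min d (T - ts) / 2 in m0' md mT.
  have St' : S (ts + m).
    split; first by rewrite mT andbT addr_ge0 // ltW.
    move=> s' /andP[s0 s't].
    case: (ltgtP s' ts) => [lt|gt|->]; last exact: Gts.
      by apply: Gbelow; rewrite s0 lt.
    have hh : 0 < s' - ts < d.
      rewrite subr_gt0 gt /=; apply: le_lt_trans md.
      by rewrite lerBlDl.
    by have := Hd _ hh; rewrite addrC subrK.
  have := sup_upper_bound hsup St'; rewrite -/ts.
  by rewrite gerDl leNgt m0'.
have Gall : forall t, 0 <= t <= T -> Good t.
  move=> t /andP[t0 tT]; move: tT; rewrite le_eqVlt => /orP[/eqP ->|ltT].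
    by rewrite -tsE.
  by apply: Gbelow; rewrite t0 tsE.
exists (tg T); split; first by rewrite /tg mulr_gt0 // expR_gt0.
move=> K t i /andP[t0 tT].
apply: le_trans (tg_mono t T t0 tT (lexx T)) _.
by apply: Gall; rewrite t0 tT.
Qed.
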